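(* Let $\mathcal G=G(n;S)$ be an integral circulant graph with $n$ odd, and let $A$ be its adjacency matrix. Then there do not exist $0\leq a<b\leq n-1$ and real $t>0$ such that $\left|\left(e^{\iota A t}\right)_{a,b}\right|=1$, where $\iota=\sqrt{-1}$. In other words, an integral circulant graph with an odd number of vertices does not admit perfect state transfer.
   Context: For a set $S\subseteq\{1,\dots,n-1\}$ with $s\in S$ iff $n-s\in S$, the circulant graph $G(n;S)$ is the undirected graph on vertex set $\mathbb{Z}_n=\{0,\dots,n-1\}$ in which $i$ and $j$ are adjacent iff $i-j \bmod n\in S$. A graph is integral if all eigenvalues of its adjacency matrix are integers. Perfect state transfer between vertices $a$ and $b$ means there is $0<t<\infty$ with $|\langle a|e^{\iota A t}|b\rangle|=1$, where $\langle a|M|b\rangle$ denotes the $(a,b)$ entry of the matrix $M$. *)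

(* Defs.v *)
From HB Require Import structures.
From mathcomp Require Import all_boot all_order all_algebra.
From mathcomp Require Import complex.
From mathcomp Require Import reals.
Set Implicit Arguments. Unset Strict Implicit. Unset Printing Implicit Defensive.
Import Order.TTheory GRing.Theory Num.Theory.
Local Open Scope ring_scope.
Local Open Scope complex_scope.

Definition diffmod (n : nat) (i j : 'I_n) : nat := ((i + (n - j)) %% n)%N.

Definition connection_set (n : nat) (S : {set 'I_n}) : Prop :=
  (forall s, s \in S -> (0 < val s)%N) /\
  (forall s, s \in S -> exists2 s', s' \in S & val s' = ((n - val s) %% n)%N).

Definition circ_adj (T : nzRingType) (n : nat) (S : {set 'I_n}) : 'M[T]_n :=
  \matrix_(i, j) ((([exists s in S, val s == diffmod i j]) : nat)%:R).

Definition integral_circulant (R : realType) (n : nat) (S : {set 'I_n}) : Prop :=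
  forall lam : R[i], eigenvalue (circ_adj R[i] S) lam -> exists z : int, lam = z%:~R.

Definition expiAt_partial (R : realType) (n : nat) (A : 'M[R]_n) (t : R) (N : nat)
  : 'M[R[i]]_n :=
  \sum_(k < N) ((('i * t%:C) ^+ k / (k`!)%:R) *: (map_mx (fun x : R => x%:C) A) ^+ k).

Definition cvgC (R : realType) (u : nat -> R[i]) (z : R[i]) : Prop :=
  forall e : R, 0 < e -> exists N0 : nat, forall N : nat, (N0 <= N)%N ->
    `|u N - z| < e%:C.

(* (a,b) entry of e^{i A t}: the limit of the (a,b) entries of the partial sums.
   exp_entry A t a b z  <->  (e^{i A t})_{a,b} = z *)
Definition exp_entry (R : realType) (n : nat) (A : 'M[R]_n) (t : R) (a b : 'I_n)
  (z : R[i]) : Prop :=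
  cvgC (fun N => expiAt_partial A t N a b) z.

Definition perfect_state_transfer (R : realType) (n : nat) (A : 'M[R]_n) (a b : 'I_n)
  : Prop :=
  exists t : R, 0 < t /\ exists z : R[i], exp_entry A t a b z /\ `|z| = 1.

(* Main.v *)
Require Import Defs.
From HB Require Import structures.
From mathcomp Require Import all_boot all_order all_algebra.
From mathcomp Require Import complex reals.
Import Order.TTheory GRing.Theory Num.Theory.
Local Open Scope ring_scope.
Set Implicit Arguments. Unset Strict Implicit. Unset Printing Implicit Defensive.

Section Comb.
Variables (n : nat) (Hn : (0 < n)%N).

Lemma diffmod_lt (i j : 'I_n) : (diffmod i j < n)%N.
Proof. by rewrite /diffmod ltn_pmod. Qed.

Lemma diffmodK (i j : 'I_n) : ((diffmod i j + j) %% n = i)%N.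
Proof.
rewrite /diffmod modnDml -addnA subnK; last exact: ltnW.
by rewrite modnDr modn_small.
Qed.

Lemma diffmod_unique (x : nat) (i j : 'I_n) :
  (x < n)%N -> ((x + j) %% n = i)%N -> diffmod i j = x.
Proof.
move=> xn H.
have: (diffmod i j + j == x + j %[mod n])%N by rewrite diffmodK H.
by rewrite eqn_modDr !modn_small ?diffmod_lt // => /eqP.
Qed.

Definition sh (c : nat) (i : 'I_n) : 'I_n := Ordinal (ltn_pmod (i + c) Hn).

Lemma sh_inj c : injective (sh c).
Proof.
move=> i j /(congr1 val) /= /eqP; rewrite eqn_modDr !modn_small //.
by move/eqP/val_inj.
Qed.

Lemma diffmod_sh c (i j : 'I_n) : diffmod (sh c i) (sh c j) = diffmod i j.
Proof.
apply: diffmod_unique; first exact: diffmod_lt.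
rewrite /= modnDmr addnA -modnDml diffmodK //.
Qed.

Lemma diffmod_sym (i j : 'I_n) : diffmod j i = ((n - diffmod i j) %% n)%N.
Proof.
apply: diffmod_unique; first exact: ltn_pmod.
rewrite modnDml -{1}(diffmodK i j) modnDmr addnA subnK ?modnDl ?modn_small //.
exact: ltnW (diffmod_lt i j).
Qed.

End Comb.
Section Mat.
Variables (R : realType) (n : nat) (S : {set 'I_n}).
Hypothesis HS : connection_set S.
Local Notation M := (circ_adj R S).

Lemma M_sym i j : M i j = M j i.
Proof.
suff H : forall i j : 'I_n, [exists s in S, val s == diffmod i j] ->
                           [exists s in S, val s == diffmod j i].
  rewrite /circ_adj !mxE; congr (nat_of_bool _)%:R.
  by apply/idP/idP; apply: H.
move=> {}i {}j /existsP [s /andP [sS /eqP sd]].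
case: HS => _ /(_ s sS) [s' s'S s'v].
apply/existsP; exists s'; rewrite s'S /= s'v sd.
have Hn0 : (0 < n)%N by apply: leq_ltn_trans (ltn_ord i).
by rewrite [diffmod j i](diffmod_sym Hn0).
Qed.

Lemma mulE (A B : 'M[R]_n) i j : (A * B) i j = \sum_l A i l * B l j.
Proof. by rewrite -mulmxE mxE. Qed.

Lemma Mpow_sym k i j : (M ^+ k) i j = (M ^+ k) j i.
Proof.
elim: k i j => [|k IH] i j.
  by rewrite expr0 !mxE eq_sym.
rewrite {1}exprS exprSr !mulE; apply: eq_bigr => l _.
by rewrite IH M_sym mulrC.
Qed.

Variable Hn : (0 < n)%N.
Lemma M_sh c i j : M (sh Hn c i) (sh Hn c j) = M i j.
Proof. by rewrite /circ_adj !mxE diffmod_sh. Qed.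

Lemma M_bnd i j : 0 <= M i j <= 1.
Proof. by rewrite /circ_adj mxE; case: [exists _ in _, _] => /=; rewrite ?lexx ?ler01. Qed.





Lemma Mpow_sh c k i j : (M ^+ k) (sh Hn c i) (sh Hn c j) = (M ^+ k) i j.
Proof.
elim: k i j => [|k IH] i j.
  by rewrite expr0 !mxE (inj_eq (@sh_inj n Hn c)).
rewrite !exprS !mulE (reindex_inj (@sh_inj n Hn c)) /=; apply: eq_bigr => l _.
by rewrite IH M_sh.
Qed.

Lemma Mpow_bnd k i j : 0 <= (M ^+ k) i j <= n%:R ^+ k.
Proof.
elim: k i j => [|k IH] i j.
  by rewrite expr0 !mxE; case: (i == j) => /=; rewrite ?lexx ?ler01.
rewrite exprS mulE; apply/andP; split.
  apply: sumr_ge0 => l _; case/andP: (M_bnd i l) => h1 _.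
  by case/andP: (IH l j) => h2 _; apply: mulr_ge0.
rewrite exprS mulr_natl -[X in _ *+ X]card_ord -sumr_const; apply: ler_sum => l _.
case/andP: (M_bnd i l) => h1 h2; case/andP: (IH l j) => h3 h4.
by rewrite -[n%:R ^+ k]mul1r; apply: ler_pM.
Show.
Qed.

End Mat.
Local Open Scope complex_scope.
From mathcomp Require Import ring lra.

Section Expo.
Variables (R : realType) (n : nat) (S : {set 'I_n}) (t : R).
Hypothesis HS : connection_set S.
Local Notation M := (circ_adj R S).
Local Notation P := (expiAt_partial M t).

Definition cc k : R[i] := ('i * t%:C) ^+ k / (k`!)%:R.
Definition dd k : R[i] := (- ('i * t%:C)) ^+ k / (k`!)%:R.

Lemma mapM_pow k i j :
  ((map_mx (fun x : R => x%:C) M) ^+ k) i j = ((M ^+ k) i j)%:C.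
Proof.
elim: k i j => [|k IH] i j.
  by rewrite !expr0 !mxE; case: (i == j).
rewrite !exprS -!mulmxE !mxE rmorph_sum; apply: eq_bigr => l _.
by rewrite IH mxE rmorphM.
Qed.

Lemma PE N i j : P N i j = \sum_(k < N) cc k * ((M ^+ k) i j)%:C.
Proof.
rewrite /expiAt_partial summxE; apply: eq_bigr => k _.
by rewrite mxE mapM_pow.
Qed.

Lemma conj_i : ('i : R[i])^* = - 'i.
Proof. by apply/eqP; rewrite eq_complex /= oppr0 !eqxx. Qed.

Lemma conj_cc k : (cc k)^* = dd k.
Proof.
have Hx : ('i * t%:C)^* = - ('i * t%:C).
  by apply/eqP; rewrite eq_complex /= ?(mul0r, mulr0, mul1r, subr0, addr0, add0r, oppr0) !eqxx.
rewrite /cc /dd rmorphM rmorphXn fmorphV rmorph_nat.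
by rewrite -Hx.
Qed.

Lemma PJE N i j : (P N i j)^* = \sum_(k < N) dd k * ((M ^+ k) i j)%:C.
Proof.
rewrite PE rmorph_sum; apply: eq_bigr => k _.
by rewrite rmorphM /= conj_cc oppr0.
Qed.

Lemma TE N b : \sum_j `|P N b j| ^+ 2 =
  \sum_(k < N) \sum_(l < N) (cc k * dd l * ((M ^+ (k + l)) b b)%:C).
Proof.
under eq_bigr => j _ do rewrite sqr_normc PJE PE mulr_suml.
rewrite exchange_big /=; apply: eq_bigr => k _.
under eq_bigr => j _ do rewrite mulr_sumr.
rewrite exchange_big /=; apply: eq_bigr => l _.
rewrite exprD -mulmxE mxE rmorph_sum mulr_sumr; apply: eq_bigr => j _.
rewrite (Mpow_sym R HS l j b) rmorphM; ring.
Qed.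

End Expo.

Section Tri.
Variable (V : zmodType) (f : nat -> nat -> V).

Lemma triG N : \sum_(0 <= k < N) \sum_(0 <= l < N - k) f k l =
   \sum_(0 <= m < N) \sum_(0 <= k < m.+1) f k (m - k).
Proof.
elim: N => [|N IH]; first by rewrite !big_geq.
rewrite [RHS]big_nat_recr //= -IH.
rewrite (@eq_big_nat _ _ _ 0 N.+1 _
  (fun k => \sum_(0 <= l < N - k) f k l + f k (N - k))); last first.
  move=> k /andP [_ kN]; rewrite subSn // big_nat_recr //.
rewrite big_split /= [X in X + _]big_nat_recr //= subnn.
by rewrite [\sum_(0 <= l < 0) _]big_geq // addr0.
Qed.

Lemma triS N k : (k <= N)%N -> \sum_(0 <= l < N) f k l = \sum_(0 <= l < N - k) f k l +
   \sum_(0 <= l < N) (if (k + l < N)%N then 0 else f k l).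
Proof.
move=> kN.
rewrite (@eq_big_nat _ _ _ 0 N _ (fun l => (if (k + l < N)%N then f k l else 0) +
   (if (k + l < N)%N then 0 else f k l))); last first.
  by move=> l _; case: ifP => _; rewrite ?addr0 ?add0r.
rewrite big_split /=; congr (_ + _).
rewrite (@big_cat_nat _ _ _ (N - k)) //=; last exact: leq_subr.
rewrite [X in _ + X]big1_seq ?addr0; last first.
  move=> l /andP [_]; rewrite mem_iota => /andP [h1 h2].
  by rewrite ifF //; apply/negbTE; rewrite -leqNgt -leq_subLR.
apply: eq_big_nat => l /andP [_ h]; rewrite ifT //.
by rewrite -ltn_subRL.
Qed.

Lemma tri N : \sum_(0 <= k < N) \sum_(0 <= l < N) f k l =
  \sum_(0 <= m < N) \sum_(0 <= k < m.+1) f k (m - k) +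
  \sum_(0 <= k < N) \sum_(0 <= l < N) (if (k + l < N)%N then 0 else f k l).
Proof.
rewrite -triG -big_split /=; apply: eq_big_nat => k /andP [_ kN].
by apply: triS; apply: ltnW.
Qed.
End Tri.

Section Expo2.
Variables (R : realType) (n : nat) (S : {set 'I_n}) (t : R).
Hypothesis HS : connection_set S.
Local Notation M := (circ_adj R S).
Local Notation P := (expiAt_partial M t).
Local Notation cc := (cc t).
Local Notation dd := (dd t).

Lemma fact_neq0 k : (k`!)%:R != 0 :> R[i].
Proof. by rewrite pnatr_eq0 -lt0n fact_gt0. Qed.

Lemma binom_cd m : \sum_(0 <= k < m.+1) cc k * dd (m - k) = (m == 0%N)%:R.
Proof.
set x := 'i * t%:C.
have E : (- x + x) ^+ m / (m`!)%:R = (m == 0%N)%:R.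
  rewrite addNr expr0n; case: m => [|m] //=; first by rewrite divr1.
  by rewrite mul0r.
rewrite -E exprDn big_mkord mulr_suml; apply: eq_bigr => [[k]] /=; rewrite ltnS => km _.
rewrite /cc /dd -(bin_fact km) !natrM mulr_natr.
have h1 := fact_neq0 k; have h2 := fact_neq0 (m - k).
have h3 : ('C(m, k))%:R != 0 :> R[i] by rewrite pnatr_eq0 -lt0n bin_gt0.
by field; rewrite h1 h2 h3.
Qed.

End Expo2.

Section Expo3.
Variables (R : realType) (n : nat) (S : {set 'I_n}) (t : R).
Hypothesis HS : connection_set S.
Local Notation M := (circ_adj R S).
Local Notation P := (expiAt_partial M t).
Local Notation cc := (cc t).
Local Notation dd := (dd t).

Definition EN N b := \sum_(0 <= k < N) \sum_(0 <= l < N)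
  (if (k + l < N)%N then 0 else cc k * dd l * ((M ^+ (k + l)) b b)%:C).

Lemma TE2 N b : (0 < N)%N -> \sum_j `|P N b j| ^+ 2 = 1 + EN N b.
Proof.
move=> N0; rewrite (TE t HS).
transitivity (\sum_(0 <= k < N) \sum_(0 <= l < N) (cc k * dd l * ((M ^+ (k + l)) b b)%:C)).
  by rewrite big_mkord; apply: eq_bigr => k _; rewrite big_mkord.
rewrite tri /EN; congr (_ + _).
rewrite (@eq_big_nat _ _ _ 0 N _ (fun m => ((M ^+ m) b b)%:C * (m == 0%N)%:R)); last first.
  move=> m _; rewrite -(binom_cd t m) mulr_sumr; apply: eq_big_nat => k /andP [_ km].
  by rewrite subnKC // mulrC mulrA.
rewrite big_ltn // big1_seq ?addr0; last first.
  move=> m /andP [_]; rewrite mem_iota => /andP [h _].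
  by rewrite eqn0Ngt h mulr0.
by rewrite mulr1 expr0 mxE eqxx.
Qed.

End Expo3.

Lemma nat_pow_fact L j : (0 < L)%N -> (L ^ j <= L ^ L * j`!)%N.
Proof.
move=> L0; elim: j => [|j IH].
  by rewrite expn0 fact0 muln1 expn_gt0 L0.
case: (leqP j.+1 L) => h.
  apply: (leq_trans (leq_pexp2l L0 h)); rewrite -{1}[(L ^ L)%N]muln1 leq_mul2l.
  by rewrite fact_gt0 orbT.
rewrite expnS factS mulnCA; apply: leq_mul => //.
exact: ltnW.
Qed.

Section RealB.
Variable R : realType.

Lemma gbound (x : R) (L j : nat) : 0 <= x -> 8 * x <= L%:R -> (0 < L)%N ->
  x ^+ j / (j`!)%:R <= (L ^ L)%:R / 8 ^+ j.
Proof.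
move=> x0 xL L0.
have f0 : 0 < (j`!)%:R :> R by rewrite ltr0n fact_gt0.
have e0 : 0 < 8 ^+ j :> R by apply: exprn_gt0.
rewrite ler_pdivrMr // mulrAC ler_pdivlMr // mulrC -exprMn.
apply: (le_trans (y := (L%:R) ^+ j)).
  by apply: lerXn2r => //; rewrite nnegrE // mulr_ge0.
by rewrite -natrX -natrM ler_nat nat_pow_fact.
Qed.

Lemma count_bound (N : nat) : ((N * N) * 2 ^ N <= 8 ^ N)%N.
Proof.
have h : (N < 2 ^ N)%N by apply: ltn_expl.
have -> : 8%N = (2 * 2 * 2)%N by [].
rewrite !expnMn; apply: leq_mul => //; apply: leq_mul; exact: ltnW.
Qed.

End RealB.

Section RealB2.
Variable R : realType.

Definition ER (t : R) (n N : nat) := \sum_(0 <= k < N) \sum_(0 <= l < N)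
  (if (k + l < N)%N then 0 else t ^+ k / (k`!)%:R * (t ^+ l / (l`!)%:R) * n%:R ^+ (k + l)).

Lemma ER_bound (t : R) n L N : 0 <= t -> 8 * (t * n%:R) <= L%:R -> (0 < L)%N ->
  ER t n N <= ((L ^ L)%:R) ^+ 2 / 2 ^+ N.
Proof.
move=> t0 tL L0.
set B : R := (L ^ L)%:R.
have B0 : 0 <= B by rewrite /B ler0n.
have e8 : forall m, 0 < 8 ^+ m :> R by move=> m; apply: exprn_gt0.
have e2 : 0 < 2 ^+ N :> R by apply: exprn_gt0.
have tn0 : 0 <= t * n%:R by rewrite mulr_ge0 ?ler0n.
apply: (le_trans (y := \sum_(0 <= k < N) \sum_(0 <= l < N) (B ^+ 2 / 8 ^+ N))).
  apply: ler_sum => k _; apply: ler_sum => l _.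
  case: ifP => kl.
    by rewrite divr_ge0 ?exprn_ge0 // ltW.
  have -> : t ^+ k / (k`!)%:R * (t ^+ l / (l`!)%:R) * n%:R ^+ (k + l) =
     ((t * n%:R) ^+ k / (k`!)%:R) * ((t * n%:R) ^+ l / (l`!)%:R).
    rewrite (exprD (n%:R : R)) !exprMn; ring.
  apply: (le_trans (y := (B / 8 ^+ k) * (B / 8 ^+ l))).
    apply: ler_pM; rewrite ?divr_ge0 ?exprn_ge0 ?ler0n //; exact: gbound.
  rewrite mulrACA -expr2 -invfM -exprD ler_pdivrMr // mulrAC ler_pdivlMr //.
  apply: ler_wpM2l; first exact: exprn_ge0.
  rewrite -!natrX ler_nat leq_pexp2l //; by rewrite leqNgt kl.
rewrite !sumr_const_nat subn0 -mulrnA -[_ *+ (N * N)]mulr_natr.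
have H : (N * N)%:R * 2 ^+ N <= 8 ^+ N :> R.
  by rewrite -!natrX -natrM ler_nat count_bound.
have n8 : 8 ^+ N != 0 :> R by rewrite gt_eqF.
have n2 : 2 ^+ N != 0 :> R by rewrite gt_eqF.
have -> : B ^+ 2 / 8 ^+ N * (N * N)%:R =
   B ^+ 2 * ((N * N)%:R * 2 ^+ N / 8 ^+ N) / 2 ^+ N.
  by field; rewrite n8 n2.
rewrite ler_pM2r ?invr_gt0 //.
rewrite -[X in _ <= X]mulr1; apply: ler_wpM2l; first exact: exprn_ge0.
by rewrite ler_pdivrMr // mul1r.
Qed.

End RealB2.

Section Expo4.
Variables (R : realType) (n : nat) (S : {set 'I_n}) (t : R).
Hypothesis HS : connection_set S.
Hypothesis t0 : 0 <= t.
Local Notation M := (circ_adj R S).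

Lemma norm_i : `|'i : R[i]| = 1.
Proof. by rewrite normc_def /= expr0n expr1n add0r sqrtr1. Qed.

Lemma norm_x : `|'i * t%:C| = t%:C.
Proof. by rewrite normrM norm_i mul1r ger0_norm // ler0c. Qed.

Lemma norm_cc k : `|cc t k| = (t ^+ k / (k`!)%:R)%:C.
Proof.
rewrite /cc normrM normrX norm_x normfV normr_nat.
by rewrite rmorphM rmorphXn fmorphV rmorph_nat.
Qed.

Lemma norm_dd k : `|dd t k| = (t ^+ k / (k`!)%:R)%:C.
Proof.
rewrite /dd normrM normrX normrN norm_x normfV normr_nat.
by rewrite rmorphM rmorphXn fmorphV rmorph_nat.
Qed.

Lemma EN_bound N b : `|EN S t N b| <= (ER t n N)%:C.
Proof.
rewrite /EN /ER !rmorph_sum.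
apply: (le_trans (ler_norm_sum _ _ _)); apply: ler_sum => k _; rewrite rmorph_sum.
apply: (le_trans (ler_norm_sum _ _ _)); apply: ler_sum => l _.
case: ifP => _; first by rewrite normr0 rmorph0.
rewrite normrM [`|cc t k * _|]normrM norm_cc norm_dd ger0_norm; last first.
  by rewrite ler0c; case/andP: (Mpow_bnd R S (k + l) b b).
rewrite -!rmorphM lecR; apply: ler_wpM2l.
  by rewrite mulr_ge0 // divr_ge0 ?exprn_ge0 ?ler0n.
by case/andP: (Mpow_bnd R S (k + l) b b).
Qed.

End Expo4.

Lemma normC_re (R : realType) (w : R[i]) : `|w| = (complex.Re `|w|)%:C.
Proof. by rewrite RRe_real // normr_real. Qed.

Lemma row_lower (R : realType) n (F : 'I_n -> R[i]) j1 j2 : j2 != j1 ->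
  `|F j1| ^+ 2 + `|F j2| ^+ 2 <= \sum_j `|F j| ^+ 2.
Proof.
move=> ne; rewrite (bigD1 j1) //= (bigD1 j2) /=; last by rewrite ne.
rewrite addrA lerDl; apply: sumr_ge0 => j _; exact: exprn_ge0.
Qed.

Section Final.
Variables (R : realType) (n : nat) (S : {set 'I_n}) (t : R).
Hypothesis HS : connection_set S.
Local Notation M := (circ_adj R S).
Local Notation P := (expiAt_partial M t).

Lemma P_sym N i j : P N i j = P N j i.
Proof. by rewrite !PE; apply: eq_bigr => k _; rewrite (Mpow_sym R HS). Qed.

Lemma P_sh (Hn : (0 < n)%N) c N i j : P N (sh Hn c i) (sh Hn c j) = P N i j.
Proof. by rewrite !PE; apply: eq_bigr => k _; rewrite Mpow_sh. Qed.

End Final.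

Unset Implicit Arguments.
Local Close Scope complex_scope.

Theorem proposition1 (R : realType) (n : nat) (S : {set 'I_n}) :
  odd n -> connection_set S -> integral_circulant R S ->
  ~ (exists (a b : 'I_n), (a < b)%N /\
       perfect_state_transfer (circ_adj R S) a b).
Proof.
move=> nodd HS _ [a [b [ab [t [t_pos [z [conv z1]]]]]]].
have Hn : (0 < n)%N by apply: leq_ltn_trans (ltn_ord a).
set c := diffmod b a.
have sha : sh Hn c a = b by apply: val_inj; rewrite /= addnC diffmodK.
set b' := sh Hn c b.
have b'a : b' != a.
  apply/negP => /eqP /(congr1 val) /= h.
  have h2 : (a + c + c == a + 0 %[mod n])%N.
    have e : ((a + c) %% n)%N = b := congr1 val sha.
    by rewrite addn0 -modnDml e h modn_small.
  rewrite -addnA eqn_modDl mod0n addnn -mul2n in h2.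
  have : (n %| c)%N by rewrite -(@Gauss_dvdr n 2 c) ?coprimen2.
  have cn : (c < n)%N by apply: diffmod_lt.
  case: (posnP c) => [c0 _ | cp /(dvdn_leq cp)]; last by rewrite leqNgt cn.
  move: sha; rewrite /sh c0 addn0 => /(congr1 val) /=; rewrite modn_small // => e.
  by move: ab; rewrite e ltnn.
have t0 : 0 <= t := ltW t_pos.
pose L := (Num.Def.archi_bound (8 * (t * n%:R))).+1.
have L0 : (0 < L)%N by [].
have tL : 8 * (t * n%:R) <= L%:R.
  apply/ltW/(lt_le_trans (archi_boundP _)); last by rewrite ler_nat leqnSn.
  by rewrite mulr_ge0 // mulr_ge0 // ler0n.
have [N0 HN0] := conv (1 / 8) ltac:(by rewrite divr_gt0).
pose N := (N0 + 4 * (L ^ L) ^ 2 + 1)%N.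
have NN0 : (N0 <= N)%N by rewrite /N -addnA leq_addr.
have Npos : (0 < N)%N by rewrite /N addn1.
have hP := HN0 N NN0.
have hT := TE2 t HS b Npos.
have hE := EN_bound S t0 N b.
have hER := ER_bound N t0 tL L0.
have hB : ((L ^ L)%:R) ^+ 2 / 2 ^+ N <= 1 / 4 :> R.
  rewrite ler_pdivrMr ?exprn_gt0 // mulrAC ler_pdivlMr // mul1r.
  rewrite -natrX -natrX -natrM ler_nat mulnC.
  apply: ltnW; apply: leq_ltn_trans (ltn_expl N (isT : (1 < 2)%N)).
  by rewrite /N addn1; apply/leqW/leq_addl.
have hrow := row_lower (expiAt_partial (circ_adj R S) t N b) b'a.
have e2 : expiAt_partial (circ_adj R S) t N b b' = expiAt_partial (circ_adj R S) t N a b.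
  by rewrite /b' -{1}sha P_sh.
rewrite (P_sym t HS N b a) e2 hT in hrow.
have hlow := lerB_normD z (expiAt_partial (circ_adj R S) t N a b - z).
rewrite [z + _]addrC subrK z1 in hlow.
have hT0 : 0 <= 1 + EN S t N b by rewrite -hT; apply: sumr_ge0 => j _; exact: exprn_ge0.
have hT1 : 1 + EN S t N b <= 1 + `|EN S t N b|.
  by rewrite -(ger0_norm hT0) -{2}normr1 ler_normD.
move: hP hlow hrow hT1 hE.
rewrite [`|expiAt_partial _ _ _ _ _ - _|]normC_re [`|expiAt_partial _ _ _ _ _|]normC_re.
rewrite [`|EN _ _ _ _|]normC_re.
have p0 := normr_ge0 (expiAt_partial (circ_adj R S) t N a b).
rewrite normC_re ler0c in p0.
move: p0.
set p := complex.Re _; set d := complex.Re _; set e := complex.Re _.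
move=> p0 hP hlow hrow hT1 hE.
rewrite ltcR in hP.
have h1 : 1 - d <= p by rewrite -lecR rmorphB rmorph1.
have h2 : p ^+ 2 + p ^+ 2 <= 1 + e.
  by rewrite -lecR !rmorphD !rmorphXn rmorph1; exact: (le_trans hrow hT1).
have h3 : e <= ER t n N by rewrite -lecR.
have h4 : e <= 1 / 4 by apply: (le_trans h3 (le_trans hER hB)).
have h5 : 7 / 8 <= p by lra.
nra.
Qed.
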